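(* Let $G$ be a finite group having a unique minimal normal subgroup $N$, which is nonabelian, with $N=R_1\times\cdots\times R_k$ ($k\ge1$), each $R_i$ isomorphic to a nonabelian simple group $R$. Let $\theta\in\mathrm{Irr}(R)$ be nonlinear and extendible to $\mathrm{Aut}(R)$, and let $\varphi=\theta\times\cdots\times\theta\in\mathrm{Irr}(N)$ ($k$ factors, via the isomorphisms $R_i\cong R$). If $\chi\in\mathrm{Irr}(G)$ is an extension of $\varphi$ to $G$ and $\chi$ is an m.i character of $G$, then $\theta$ is an m.i character of $R$.
   Context: A nonlinear $\chi\in\mathrm{Irr}(X)$ is an m.i character of the group $X$ if there exist a proper subgroup $U<X$, $\lambda\in\mathrm{Irr}(U)$ and an integer $m\ge1$ with $\lambda^X=m\chi$. *)

(* Defs.v *)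
From HB Require Import structures.
From mathcomp Require Import all_boot all_order all_algebra all_fingroup all_solvable all_field all_character.
Set Implicit Arguments. Unset Strict Implicit. Unset Printing Implicit Defensive.
Import Order.TTheory GRing.Theory Num.Theory.
Local Open Scope ring_scope.

Definition mi_char (gT : finGroupType) (X : {group gT}) (chi : 'CF(X)) : Prop :=
  [/\ chi \in irr X, ~~ (chi \is a linear_char) &
   exists U : {group gT}, U \proper X /\
     exists2 lambda : 'CF(U), lambda \in irr U &
       exists2 m : nat, (0 < m)%N & 'Ind[X] lambda = m%:R *: chi].

(* theta in Irr(R) is extendible to Aut(R), where R is identified with
   Inn(R) <= Aut(R) via x |-> conjugation by x. *)
Definition ext_to_Aut (rT : finGroupType) (R : {group rT}) (theta : 'CF(R)) : Prop :=
  exists2 psi : 'CF([group of Aut R]), psi \in irr [group of Aut R] &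
    forall x, x \in R -> psi (conj_aut R x) = theta x.

(* Main.v *)
Require Import Defs.
From HB Require Import structures.
From mathcomp Require Import all_boot all_order all_algebra all_fingroup all_solvable all_field all_character.
Import GRing.Theory Num.Theory.
Local Open Scope ring_scope.

Section Helpers.
Local Set Implicit Arguments.
Local Unset Strict Implicit.

Lemma fiber_card {gT : finGroupType} (K U : {group gT}) y : y \in (K * U)%g ->
  #|[pred p : gT * gT | [&& p.1 \in K, p.2 \in U & (p.1 * p.2 == y)%g]]| = #|K :&: U|.
Proof.
case/mulsgP=> n0 u0 Kn0 Uu0 ->.
rewrite -(card_imset (mem (K :&: U)) (f := fun w => (n0 * w, w^-1 * u0)%g)); last first.
  by move=> w1 w2 [] /mulgI.
apply: eq_card => -[n u] /=; rewrite inE /=.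
apply/idP/imsetP => [/and3P[Kn Uu /eqP e] | [w /setIP[Kw Uw] [-> ->]]].
  have ew : (n0^-1 * n = u0 * u^-1)%g.
    by rewrite (canRL (mulgK u) e) -mulgA mulKg.
  exists (n0^-1 * n)%g; first by rewrite inE groupM ?groupV //= ew groupM ?groupV.
  by rewrite mulKVg ew invMg invgK mulgKV.
by rewrite groupM ?groupV ?Kn0 //= groupM ?groupV //= mulgA -(mulgA n0) mulgV mulg1 eqxx.
Qed.

Lemma sum_mulg {gT : finGroupType} (K U : {group gT}) (g : gT -> algC) :
  \sum_(n in K) \sum_(u in U) g (n * u)%g = #|K :&: U|%:R * \sum_(y in (K * U)%g) g y.
Proof.
rewrite pair_big_dep /=.
rewrite (partition_big (fun p => p.1 * p.2)%g (mem (K * U)%g)) /=; last first.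
  by move=> [n u] /andP[Kn Uu]; apply: mem_mulg.
rewrite mulr_sumr; apply: eq_bigr => y Ky.
rewrite (eq_bigr (fun _ => g y)); last by move=> p /andP[_ /eqP->].
rewrite sumr_const mulr_natl; congr (_ *+ _).
rewrite -(fiber_card Ky); apply: eq_card => p; rewrite !inE /=.
by rewrite andbA.
Qed.
Lemma ResInd_normal {gT : finGroupType} (K U : {group gT}) (lam : 'CF(U)) : U \subset ('N(K))%g ->
  'Res[K] ('Ind[K <*> U] lam) = 'Ind[K] ('Res[K :&: U] lam).
Proof.
move=> nKU; apply/cfun_inP => x Kx.
rewrite cfResE ?joing_subl // !cfIndE ?joing_subr ?subsetIl //.
have e1 : \sum_(n in K) ('Res[K :&: U] lam) (x ^ n)%g = \sum_(n in K) lam (x ^ n)%g.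
  apply: eq_bigr => n Kn; have Kxn : (x ^ n)%g \in K by rewrite groupJ.
  have [Uxn|nUxn] := boolP ((x ^ n)%g \in U).
    by rewrite cfResE ?subsetIr // inE Kxn.
  by rewrite !cfun0 // inE negb_and nUxn orbT.
have e2 : \sum_(n in K) \sum_(u in U) lam (x ^ (n * u))%g
          = #|U|%:R * \sum_(n in K) lam (x ^ n)%g.
  rewrite mulr_sumr; apply: eq_bigr => n Kn.
  rewrite (eq_bigr (fun _ => lam (x ^ n)%g)).
2: by move=> u Uu; rewrite conjgM (cfunJ lam _ Uu).
  by rewrite sumr_const mulr_natl.
have e3 := sum_mulg K U (fun y => lam (x ^ y)%g); rewrite e2 in e3.
have eL : gval (K <*> U)%G = (K * U)%g := norm_joinEr nKU.
rewrite e1 eL.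
have nzW : (#|K :&: U|%:R : algC) != 0 by rewrite neq0CG.
have nzU : (#|U|%:R : algC) != 0 by rewrite neq0CG.
rewrite -[X in _ * X = _](mulKf nzW) -e3 mulrCA mulKf //.
Qed.

Lemma ResInd_ge {gT : finGroupType} (L H : {group gT}) (I : 'CF(L)) : L \subset H ->
  I \is a character -> 'Res[L] ('Ind[H] I) - I \is a character.
Proof.
move=> sLH NI.
have -> : 'Res[L] ('Ind[H] I) - I
   = \sum_i '[I, 'chi_i] *: ('Res[L] ('Ind[H] 'chi_i) - 'chi_i).
  rewrite (eq_bigr _ (fun i _ => scalerBr _ _ _)) sumrB -cfun_sum_cfdot.
  congr (_ - _); rewrite {1}[I]cfun_sum_cfdot !linear_sum.
  by apply: eq_bigr => i _; rewrite !linearZ.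
apply: rpred_sum => i _; apply: rpredZ_nat; first by rewrite Cnat_cfdot_char ?irr_char.
have Nr := cfRes_char L (cfInd_char H (irr_char i)).
have hi : i \in irr_constt ('Res[L] ('Ind[H] 'chi_i)).
  by rewrite inE /= cfdot_Res_l cfnorm_eq0 Ind_irr_neq0.
have /(constt_charP _ Nr)[c Nc ->] := hi.
by rewrite addrC addKr.
Qed.

Lemma step {gT : finGroupType} (H K U : {group gT}) (lam : 'CF(U)) (beta : 'CF(K)) (a : algC) :
  (K <| H)%g -> U \subset H -> lam \is a character -> beta \in irr K ->
  'Res[K] ('Ind[H] lam) = a *: beta ->
  forall j, j \in irr_constt ('Res[K :&: U] lam) ->
  'Ind[K] 'chi[K :&: U]_j = '['Ind[K] 'chi_j, beta] *: beta.
Proof.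
move=> nsKH sUH Nlam /irrP[i0 ->] eRI j jc.
have [sKH nKH] := andP nsKH.
have nKU : U \subset 'N(K)%g := subset_trans sUH nKH.
set L := (K <*> U)%G.
have sLH : L \subset H by rewrite join_subG sKH.
have sKL : K \subset L := joing_subl K U.
have sUL : U \subset L := joing_subr K U.
set I := 'Ind[L] lam.
have NI : I \is a character := cfInd_char _ Nlam.
have /(constt_charP _ (cfRes_char (K :&: U) Nlam))[c Nc ec] := jc.
have eq1 : 'Res[K] ('Ind[H] lam) = 'Ind[K] 'chi_j + 'Ind[K] c
            + 'Res[K] ('Res[L] ('Ind[H] I) - I).
  rewrite linearB /= cfResRes // /I ResInd_normal // ec linearD /= (cfIndInd _ sLH sUL).
  by rewrite addrC subrK.
have NY := cfRes_char K (ResInd_ge sLH NI).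
have NX : 'Ind[K] c \is a character := cfInd_char _ Nc.
have NJ : 'Ind[K] 'chi[K :&: U]_j \is a character := cfInd_char _ (irr_char j).
have zero i : i != i0 -> '['Ind[K] 'chi_j, 'chi_i] = 0.
  move=> ne; have := congr1 (fun f => '[f, 'chi_i]) eq1; rewrite /= eRI.
  rewrite cfdotZl cfdot_irr eq_sym (negbTE ne) mulr0 !cfdotDl.
  move/esym/eqP; rewrite -addrA paddr_eq0 ?natr_ge0 ?Cnat_cfdot_char ?irr_char //.
    by case/andP=> /eqP.
  by rewrite rpredD ?Cnat_cfdot_char ?irr_char.
rewrite {1}[LHS]cfun_sum_cfdot (bigD1 i0) //= big1 ?addr0 // => i ne.
by rewrite zero ?scale0r.
Qed.

Lemma step2 {gT : finGroupType} (H K U : {group gT}) (l : Iirr U) (beta : 'CF(K)) (a : algC) :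
  (K <| H)%g -> U \subset H -> beta \in irr K ->
  'Res[K] ('Ind[H] 'chi_l) = a *: beta ->
  exists j : Iirr (K :&: U), j \in irr_constt ('Res[K :&: U] 'chi_l) /\
    exists2 n : nat, (0 < n)%N & 'Ind[K] 'chi_j = n%:R *: beta.
Proof.
move=> nsKH sUH Ib eR.
have /neq0_has_constt[j jc] := Res_irr_neq0 (K :&: U) l.
exists j; split => //.
have e := step nsKH sUH (irr_char l) Ib eR jc.
have /natrP[n en] : '['Ind[K] 'chi[K :&: U]_j, beta] \in Num.nat.
  by rewrite Cnat_cfdot_char ?cfInd_char ?irr_char // irrWchar.
exists n; last by rewrite e en.
rewrite lt0n; apply: contraNneq (Ind_irr_neq0 j (subsetIl K U)) => n0.
by rewrite e en n0 scale0r.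
Qed.
End Helpers.

Theorem lemma2p4 (gT rT : finGroupType) (G N : {group gT}) (k : nat)
  (Rs : 'I_k -> {group gT}) (R : {group rT})
  (f : forall i : 'I_k, {morphism R >-> gT})
  (isoR : forall i : 'I_k, isom R (Rs i) (f i))
  (defN : (\big[dprod/1%g]_(i < k) Rs i)%g = N)
  (theta : 'CF(R)) (chi : 'CF(G)) :
  minnormal N G ->
  (forall M : {group gT}, minnormal M G -> M = N) ->
  ~~ abelian N ->
  (0 < k)%N ->
  simple R -> ~~ abelian R ->
  theta \in irr R -> ~~ (theta \is a linear_char) ->
  ext_to_Aut theta ->
  chi \in irr G ->
  'Res[N] chi = cfBigdprod defN (fun i => cfIsom (isoR i) theta) ->
  mi_char chi ->
  mi_char theta.
Proof.
move=> minN uniqN nabN k0 simR nabR thIrr thNL extA chiIrr hres [_ _ [U [pUG [lam lamIrr [m m0 eInd]]]]].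
case/irrP: lamIrr => l el; subst lam.
set phi := cfBigdprod defN _ in hres.
have phiIrr : phi \in irr N by apply: cfBigdprod_irr => i _; rewrite cfIsom_irr.
have sUG : U \subset G := proper_sub pUG.
have chi1 : chi 1%g != 0 by case/irrP: chiIrr => c ->; apply: irr1_neq0.
have sNG : N \subset G.
  apply/negP => nsNG.
  move: hres; rewrite cfResEout; last by apply/negP.
  move=> hres.
  have /irrP[i0 ei0] := phiIrr.
  have e0 : '[phi, 'chi_0] = chi 1%g by rewrite -hres irr0 cfdotZl cfnorm1 mulr1.
  rewrite ei0 cfdot_irr in e0.
  have i00 : i0 = 0 by apply/eqP; apply: contraNT chi1 => /negPf ne; rewrite -e0 ne.
  have : phi == 1 by rewrite ei0 i00 irr0.
  rewrite cfBigdprod_eq1; last by move=> i _; rewrite cfIsom_char irrWchar.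
  move/forallP/(_ (Ordinal k0)); rewrite /= cfIsom_eq1 => /eqP th1.
  by move: thNL; rewrite th1 cfun1_lin_char.
have nsNG : (N <| G)%g.
  by rewrite /normal sNG; case/mingroupP: minN => /andP[_ ->].
have eR : 'Res[N] ('Ind[G] 'chi_l) = m%:R *: phi by rewrite eInd linearZ /= hres.
have nsubNU : ~~ (N \subset U).
  apply/negP => sNU.
  have psiIrr : 'Res[U] chi \in irr U.
    apply: (@cfRes_irr_irr _ U N); first by rewrite cfRes_char ?irrWchar.
    by rewrite cfResRes // hres.
  case/irrP: psiIrr => p ep.
  have e1 : '['Ind[G] 'chi_l, chi] = m%:R by rewrite eInd cfdotZl irrWnorm // mulr1.
  rewrite -Frobenius_reciprocity ep cfdot_irr in e1.
  case: (eqVneq l p) e1 => [elp|nlp]; last first.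
    by move=> /esym/eqP; rewrite pnatr_eq0 => /eqP m00; rewrite m00 in m0.
  subst p; move/eqP; rewrite eqr_nat => /eqP m1; subst m.
  have := congr1 (fun h : 'CF(G) => h 1%g) eInd; rewrite /= cfInd1 // cfunE -ep cfRes1 mul1r.
  rewrite -[X in _ = X]mul1r => /(mulIf chi1)/eqP; rewrite pnatr_eq1 indexg_eq1 => sGU.
  by move: (proper_subn pUG); rewrite sGU.
have [j1 [_ [n1 n10 eI1]]] := step2 nsNG sUG phiIrr eR.
have [i nsub] : exists i, ~~ (Rs i \subset N :&: U).
  case: (pickP (fun i => ~~ (Rs i \subset N :&: U))) => [i hi|h]; first by exists i.
  exfalso; apply: (negP nsubNU); rewrite -(bigdprodWY defN) gen_subG.
  apply/bigcupsP => i _; have := h i; rewrite /= => /negbFE sub.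
  exact: subset_trans sub (subsetIr _ _).
have nsRN : (Rs i <| N)%g by have := defN; rewrite (bigD1 i) //= => /dprod_normal2[].
have sWN : (N :&: U)%G \subset N := subsetIl N U.
set beta := cfIsom (isoR i) theta.
have betaIrr : beta \in irr (Rs i) by rewrite cfIsom_irr.
have nzphi1 : phi 1%g != 0 by case/irrP: phiIrr => ip ->; apply: irr1_neq0.
have [nza eRes] := cfBigdprodK (i:=i) nzphi1 (isT : xpredT i).
move: (_ / _) nza eRes => a nza eRes.
have Resphi : 'Res[Rs i] phi = a^-1 *: beta.
  by rewrite /beta -eRes scalerA mulVf ?scale1r.
have eR2 : 'Res[Rs i] ('Ind[N] 'chi_j1) = (n1%:R * a^-1) *: beta.
  by rewrite eI1 linearZ /= Resphi scalerA.
have [j2 [_ [n2 n20 eI2]]] := step2 nsRN sWN betaIrr eR2.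
set V := (Rs i :&: (N :&: U)%G)%G in j2 eI2.
have sV : V \subset Rs i := subsetIl _ _.
have pV : V \proper Rs i.
  by rewrite properE sV /= subsetI subxx.
pose isoS := isom_sym (isoR i).
have [injg img] := isomP isoS.
have isoH := restr_isom sV isoS.
have eInd2 := cfIndIsom isoS isoH (fun x _ => erefl) sV 'chi_j2.
rewrite eI2 linearZ /= /isoS cfIsomK in eInd2.
split => //; exists (isom_inv (isoR i) @* V)%G; split.
  by have := injm_proper injg sV (subxx (Rs i)); rewrite img pV => ->.
exists (cfIsom isoH 'chi_j2); first by rewrite cfIsom_irr mem_irr.
by exists n2.
Qed.
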